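(* Let ${\mathbf{X}}\in\mathbb{R}^{m\times n}$ and suppose ${\mathbf{X}}={\mathbf{U}}_0{\mathbf{V}}_0^T$ with ${\mathbf{U}}_0\in\mathbb{R}_+^{m\times r}$, ${\mathbf{V}}_0\in\mathbb{R}_+^{n\times r}$ both of full column rank $r$, where $r\le\min\{m,n\}$. Let ${\mathbf{A}}_1\in\mathbb{R}^{r\times m}$ and ${\mathbf{A}}_2\in\mathbb{R}^{n\times r}$ be such that the $r\times r$ matrix ${\mathbf{A}}_1{\mathbf{X}}{\mathbf{A}}_2$ is invertible. Let $\lambda_1,\lambda_2>0$ and let $(\tilde{\mathbf{U}},\tilde{\mathbf{V}})$ be any minimizer, over ${\mathbf{U}}\in\mathbb{R}_+^{m\times r}$, ${\mathbf{V}}\in\mathbb{R}_+^{n\times r}$, of $$\|{\mathbf{A}}_1({\mathbf{X}}-{\mathbf{U}}{\mathbf{V}}^T)\|_F^2+\|({\mathbf{X}}-{\mathbf{U}}{\mathbf{V}}^T){\mathbf{A}}_2\|_F^2+\lambda_1\|({\mathbf{I}}_m-\mathbf{P}_1){\mathbf{U}}{\mathbf{V}}^T\|_F^2+\lambda_2\|{\mathbf{U}}{\mathbf{V}}^T({\mathbf{I}}_n-\mathbf{P}_2)\|_F^2,$$ where $\mathbf{P}_1\in\mathbb{R}^{m\times m}$ is the orthogonal projection onto the column space of ${\mathbf{X}}{\mathbf{A}}_2$ and $\mathbf{P}_2\in\mathbb{R}^{n\times n}$ is the orthogonal projection onto the row space of ${\mathbf{A}}_1{\mathbf{X}}$. Then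 ${\mathbf{X}}=\tilde{\mathbf{U}}\tilde{\mathbf{V}}^T$.
   Context: $\mathbb{R}_+^{a\times b}$ denotes the set of $a\times b$ matrices with all entries nonnegative. $\|\cdot\|_F$ is the Frobenius norm. *)

(* Defs.v *)
From HB Require Import structures.
From mathcomp Require Import all_boot all_order all_algebra.
From mathcomp Require Import reals.
Set Implicit Arguments. Unset Strict Implicit. Unset Printing Implicit Defensive.
Import Order.TTheory GRing.Theory Num.Theory.
Local Open Scope ring_scope.

Definition nonneg_mx (R : realType) (a b : nat) (M : 'M[R]_(a, b)) : Prop :=
  forall i j, 0 <= M i j.

Definition frob2 (R : realType) (a b : nat) (M : 'M[R]_(a, b)) : R :=
  \sum_(i < a) \sum_(j < b) (M i j) ^+ 2.

(* P is the orthogonal projection (symmetric idempotent) onto the subspace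
   spanned by the rows of S (viewed as vectors in R^a). *)
Definition is_orth_proj (R : realType) (a k : nat) (P : 'M[R]_a) (S : 'M[R]_(k, a)) : Prop :=
  [/\ P^T = P, P *m P = P & (P == S)%MS].

Definition objective (R : realType) (m n r : nat)
  (X : 'M[R]_(m, n)) (A1 : 'M[R]_(r, m)) (A2 : 'M[R]_(n, r))
  (P1 : 'M[R]_m) (P2 : 'M[R]_n) (l1 l2 : R)
  (U : 'M[R]_(m, r)) (V : 'M[R]_(n, r)) : R :=
  frob2 (A1 *m (X - U *m V^T)) + frob2 ((X - U *m V^T) *m A2)
  + l1 * frob2 ((1%:M - P1) *m (U *m V^T))
  + l2 * frob2 ((U *m V^T) *m (1%:M - P2)).

(* Main.v *)
Require Import Defs.
From HB Require Import structures.
From mathcomp Require Import all_boot all_order all_algebra.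
From mathcomp Require Import reals.
From mathcomp Require Import lra.
Import Order.TTheory GRing.Theory Num.Theory.
Local Open Scope ring_scope.

Lemma frob2_ge0 (R : realType) a b (M : 'M[R]_(a, b)) : 0 <= frob2 M.
Proof. by apply: sumr_ge0 => i _; apply: sumr_ge0 => j _; apply: sqr_ge0. Qed.

Lemma frob2_eq0 (R : realType) a b (M : 'M[R]_(a, b)) : frob2 M = 0 -> M = 0.
Proof.
move=> H; apply/matrixP => i j; rewrite mxE.
have Hi := psumr_eq0P (fun k _ => sumr_ge0 _ (fun l _ => sqr_ge0 _)) H (i:=i) isT.
have Hj := psumr_eq0P (fun l _ => sqr_ge0 _) Hi (i:=j) isT.
by move/eqP: Hj; rewrite sqrf_eq0 => /eqP.
Qed.

Lemma frob2_0 (R : realType) a b : frob2 (0 : 'M[R]_(a, b)) = 0.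
Proof. by rewrite /frob2 big1 // => i _; rewrite big1 // => j _; rewrite mxE expr0n. Qed.

Theorem mainTheorem1 (R : realType) (m n r : nat)
  (X : 'M[R]_(m, n)) (U0 : 'M[R]_(m, r)) (V0 : 'M[R]_(n, r))
  (A1 : 'M[R]_(r, m)) (A2 : 'M[R]_(n, r))
  (P1 : 'M[R]_m) (P2 : 'M[R]_n) (l1 l2 : R)
  (Ut : 'M[R]_(m, r)) (Vt : 'M[R]_(n, r)) :
  (r <= minn m n)%N ->
  X = U0 *m V0^T ->
  nonneg_mx U0 -> nonneg_mx V0 ->
  \rank U0 = r -> \rank V0 = r ->
  A1 *m X *m A2 \in unitmx ->
  0 < l1 -> 0 < l2 ->
  is_orth_proj P1 (X *m A2)^T ->
  is_orth_proj P2 (A1 *m X) ->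
  nonneg_mx Ut -> nonneg_mx Vt ->
  (forall (U : 'M[R]_(m, r)) (V : 'M[R]_(n, r)),
      nonneg_mx U -> nonneg_mx V ->
      objective X A1 A2 P1 P2 l1 l2 Ut Vt <= objective X A1 A2 P1 P2 l1 l2 U V) ->
  X = Ut *m Vt^T.
Proof.
move=> _ hX hU0 hV0 _ _ hunit hl1 hl2 [P1s P1i P1e] [P2s P2i P2e] hUt hVt hopt.
have rX : (\rank X <= r)%N by rewrite hX; exact: leq_trans (mxrankM_maxl _ _) (rank_leq_col _).
have rA : \rank (A1 *m X *m A2) = r by apply: mxrank_unit.
have XP2 : X *m P2 = X.
  have e : (A1 *m X == X)%MS.
    rewrite -(mxrank_leqif_eq (submxMl A1 X)).
    rewrite eqn_leq mxrankM_maxr /=; apply: leq_trans rX _; rewrite -{1}rA; exact: mxrankM_maxl.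
  have : (X <= P2)%MS by rewrite (eqmxP P2e) -(eqmxP e).
  by move/submxP=> [W ->]; rewrite -mulmxA P2i.
have P1X : P1 *m X = X.
  have e : ((X *m A2)^T == X^T)%MS.
    rewrite -(mxrank_leqif_eq _); last by rewrite trmx_mul submxMl.
    rewrite !mxrank_tr eqn_leq mxrankM_maxl /=; apply: leq_trans rX _; rewrite -{1}rA -mulmxA; exact: mxrankM_maxr.
  have : (X^T <= P1)%MS by rewrite (eqmxP P1e) -(eqmxP e).
  move/submxP=> [W hW].
  have : X^T *m P1 = X^T by rewrite hW -mulmxA P1i.
  by move/(congr1 trmx); rewrite trmx_mul P1s !trmxK.
have obj0 : objective X A1 A2 P1 P2 l1 l2 U0 V0 = 0.
  rewrite /objective -hX subrr mulmx0 mul0mx mulmxBl mul1mx P1X mulmxBr mulmx1 XP2 subrr.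
  by rewrite !frob2_0 !mulr0 !addr0.
have := hopt U0 V0 hU0 hV0; rewrite obj0 /objective.
set Y := Ut *m Vt^T.
have g1 := frob2_ge0 _ _ _ (A1 *m (X - Y)).
have g2 := frob2_ge0 _ _ _ ((X - Y) *m A2).
have g3 := frob2_ge0 _ _ _ ((1%:M - P1) *m Y).
have g4 := frob2_ge0 _ _ _ (Y *m (1%:M - P2)).
have g3' := mulr_ge0 (ltW hl1) g3.
have g4' := mulr_ge0 (ltW hl2) g4.
move=> hle.
have e2 : frob2 ((X - Y) *m A2) = 0 by lra.
have e4 : l2 * frob2 (Y *m (1%:M - P2)) = 0 by lra.
move/eqP: e4; rewrite mulf_eq0 (negbTE (lt0r_neq0 hl2)) /= => /eqP /frob2_eq0 e4.
move/frob2_eq0: e2 => e2.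
have YP2 : Y *m P2 = Y by apply/eqP; rewrite eq_sym -subr_eq0 -{1}(mulmx1 Y) -mulmxBr e4.
set D := X - Y.
have DP2 : D *m P2 = D by rewrite /D mulmxBl XP2 YP2.
have : (D <= A1 *m X)%MS by rewrite -(eqmxP P2e) -DP2 submxMl.
move/submxP=> [C hC].
have hDA : D *m A2 = 0 by rewrite /D e2.
have C0 : C = 0.
  have hB : C *m (A1 *m X *m A2) = 0 by rewrite mulmxA -hC.
  by rewrite -(mulmxK hunit C) hB mul0mx.
by apply/eqP; rewrite -subr_eq0 -/D hC C0 mul0mx.
Qed.
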